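(* Let $T\ge2$. Let $\Phi$ be the $T\times T$ matrix with $\Phi_{ij}=1$ if $i>j$ and $\Phi_{ij}=0$ otherwise; let $\mathcal P=I_T-\frac1T\mathbf 1\mathbf 1^*$ be the orthogonal projector onto the hyperplane $V\subset\mathbb R^T$ (or $\mathbb C^T$) orthogonal to $\mathbf 1=(1,\dots,1)^*$; let $\tilde\Phi=\mathcal P\Phi\mathcal P$. Let $F$ be the cyclic lead operator $F(x_1,x_2,\dots,x_T)=(x_2,x_3,\dots,x_T,x_1)$, which preserves $V$, and let $F_V$ denote its restriction to $V$. Then $\tilde\Phi$ preserves $V$, and its restriction to $V$ equals $-(\mathbf 1_V-F_V)^{-1}$, where $\mathbf 1_V$ is the identity operator on $V$. *)

(* Defs.v *)
(* Vectors of R^T (or C^T) are column vectors 'cV[R]_T,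
   indices 'I_T stand for {1,...,T} (shifted by one). *)
From HB Require Import structures.
From mathcomp Require Import all_boot all_order all_algebra.
Unset Printing Implicit Defensive.
Import Order.TTheory GRing.Theory Num.Theory.
Local Open Scope ring_scope.

Definition Phi (R : numFieldType) (T : nat) : 'M[R]_T :=
  \matrix_(i < T, j < T) (if (j < i)%N then 1 else 0).

Definition ones (R : numFieldType) (T : nat) : 'cV[R]_T := const_mx 1.

Definition Pproj (R : numFieldType) (T : nat) : 'M[R]_T :=
  1%:M - (T%:R)^-1 *: (ones R T *m (ones R T)^T).

Definition Phit (R : numFieldType) (T : nat) : 'M[R]_T :=
  Pproj R T *m Phi R T *m Pproj R T.

Definition Flead (R : numFieldType) (T : nat) : 'M[R]_T :=
  \matrix_(i < T, j < T) (if j == ordS i then 1 else 0).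

Definition Vhyp (R : numFieldType) (T : nat) : pred 'cV[R]_T :=
  [pred x | (ones R T)^T *m x == 0].

(* Main.v *)
Require Import Defs.
From HB Require Import structures.
From mathcomp Require Import all_boot all_order all_algebra.
Import Order.TTheory GRing.Theory Num.Theory.
Local Open Scope ring_scope.

Section S.
Variables (R : numFieldType) (T : nat).

Lemma memV (x : 'cV[R]_T) : (x \in Vhyp R T) = (\sum_i x i 0 == 0).
Proof.
rewrite inE /=; apply/eqP/eqP.
  move/matrixP/(_ 0 0); rewrite !mxE => H; rewrite -[X in _ = X]H; apply: eq_bigr => i _.
  by rewrite !mxE mul1r.
move=> H; apply/matrixP => i j; rewrite !ord1 !mxE -[X in _ = X]H.
by apply: eq_bigr => k _; rewrite !mxE mul1r.
Qed.

Lemma FleadE (x : 'cV[R]_T) i j : (Flead R T *m x) i j = x (ordS i) j.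
Proof.
rewrite mxE (bigD1 (ordS i)) //= mxE eqxx mul1r big1 ?addr0 // => k /negbTE nk.
by rewrite mxE nk mul0r.
Qed.

Lemma sumF (x : 'cV[R]_T) : \sum_i x (ordS i) 0 = \sum_i x i 0.
Proof. by rewrite [RHS](reindex_inj (@ordS_inj T)). Qed.

Lemma PhiE (x : 'cV[R]_T) i j : (Phi R T *m x) i j = \sum_(k < T | (k < i)%N) x k j.
Proof.
rewrite mxE [RHS]big_mkcond /=; apply: eq_bigr => k _; rewrite mxE.
by case: ifP => _; rewrite ?mul1r ?mul0r.
Qed.

Lemma FB (x : 'cV[R]_T) i j :
  ((1%:M - Flead R T) *m x) i j = x i j - x (ordS i) j.
Proof.
rewrite mulmxBl mul1mx [LHS]mxE [in X in _ + X]mxE FleadE //.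
Qed.

End S.

Theorem lemma1 (R : numFieldType) (T : nat) (hT : (2 <= T)%N) :
  (* F preserves V *)
  (forall x, x \in Vhyp R T -> Flead R T *m x \in Vhyp R T) /\
  (* Phi~ preserves V *)
  (forall x, x \in Vhyp R T -> Phit R T *m x \in Vhyp R T) /\
  (* 1_V - F_V is invertible on V (bijective V -> V) *)
  {in Vhyp R T &, injective (fun x => (1%:M - Flead R T) *m x)} /\
  (forall y, y \in Vhyp R T ->
     exists2 x, x \in Vhyp R T & (1%:M - Flead R T) *m x = y) /\
  (* Phi~|_V = -(1_V - F_V)^{-1} *)
  (forall x, x \in Vhyp R T ->
     (1%:M - Flead R T) *m (Phit R T *m x) = - x).
Proof.
have T0 : (T%:R : R) != 0 by rewrite pnatr_eq0 -lt0n; case: T hT.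
have oo : (ones R T)^T *m ones R T = T%:R%:M.
  apply/matrixP => i j; rewrite !ord1 !mxE.
  under eq_bigr do rewrite !mxE mul1r.
  by rewrite sumr_const card_ord.
have oP : (ones R T)^T *m Pproj R T = 0.
  rewrite /Pproj mulmxBr mulmx1 -scalemxAr mulmxA oo mul_scalar_mx scalerA.
  by rewrite mulVf // scale1r subrr.
have Px x : x \in Vhyp R T -> Pproj R T *m x = x.
  rewrite inE => /eqP Hx.
  by rewrite /Pproj mulmxBl mul1mx -scalemxAl -mulmxA Hx mulmx0 scaler0 subr0.
have FP : (1%:M - Flead R T) *m ones R T = 0.
  by apply/matrixP => i j; rewrite FB !mxE subrr.
have key : forall x, x \in Vhyp R T ->
     (1%:M - Flead R T) *m (Phit R T *m x) = - x.
  move=> x xV.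
  have -> : Phit R T *m x = Pproj R T *m (Phi R T *m x).
    by rewrite /Phit -!mulmxA (Px x xV).
  set w := Phi R T *m x.
  have -> : (1%:M - Flead R T) *m (Pproj R T *m w) = (1%:M - Flead R T) *m w.
    by rewrite /Pproj [X in _ *m X = _]mulmxBl mul1mx mulmxBr -scalemxAl -scalemxAr !mulmxA FP
      !mul0mx scaler0 subr0.
  apply/matrixP => i j; rewrite !ord1 FB !PhiE mxE.
  have sS : forall k : 'I_T,
      \sum_(l < T | (l < k.+1)%N) x l 0 = x k 0 + \sum_(l < T | (l < k)%N) x l 0.
    move=> k; rewrite (bigD1 k) ?ltnSn //=; apply: congr1.
    by apply: eq_bigl => l; rewrite ltnS ltn_neqAle andbC.
  rewrite /=; case: (ltnP i.+1 T) => hi.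
    by rewrite modn_small // sS opprD addrCA subrr addr0.
  have iT : i.+1 = T by apply/eqP; rewrite eqn_leq hi ltn_ord.
  rewrite iT modnn [X in _ - X]big_pred0; last by move=> k; rewrite ltn0.
  rewrite subr0.
  move: xV; rewrite memV => /eqP S0.
  have : \sum_(l < T | (l < i.+1)%N) x l 0 = 0.
    rewrite -[RHS]S0 iT; apply: eq_bigl => l; by rewrite ltn_ord.
  by rewrite sS => /eqP; rewrite addrC addr_eq0 => /eqP.
split.
  by move=> x; rewrite !memV => /eqP S0; under eq_bigr do rewrite FleadE; rewrite sumF S0.
split.
  move=> x _; rewrite inE /= /Phit !mulmxA oP !mul0mx //.
split; last first.
  split=> // y yV; exists (- (Phit R T *m y)).
    by rewrite inE /= mulmxN /Phit !mulmxA oP !mul0mx oppr0.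
  by rewrite mulmxN key // opprK.
move=> x y xV yV /= E.
have zV : x - y \in Vhyp R T.
  move: xV yV; rewrite !memV => /eqP Sx /eqP Sy.
  by under eq_bigr do rewrite !mxE; rewrite sumrB Sx Sy subrr.
set z := x - y in zV.
have Ez : (1%:M - Flead R T) *m z = 0 by rewrite /z mulmxBr E subrr.
have Fz i : z i 0 = z (ordS i) 0.
  by apply/eqP; rewrite -subr_eq0 -FB Ez mxE.
have T0' : (0 < T)%N by apply: leq_trans hT.
have C : forall k (hk : (k < T)%N), z (Ordinal hk) 0 = z (Ordinal T0') 0.
  have zeq (a b : 'I_T) : val a = val b -> z a 0 = z b 0 by move/val_inj ->.
  elim=> [|k IH] hk; first exact: zeq.
  have hk' : (k < T)%N by apply: ltnW.
  rewrite -(IH hk') (Fz (Ordinal hk')); apply: zeq => /=.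
  by rewrite modn_small.
have Cz i : z i 0 = z (Ordinal T0') 0.
  by case: i => k hk; rewrite C.
move: zV; rewrite memV.
under eq_bigr do rewrite Cz.
rewrite sumr_const card_ord -mulr_natr mulf_eq0 (negbTE T0) orbF => /eqP c0.
apply/eqP; rewrite -subr_eq0; apply/eqP/matrixP => i j.
by rewrite !ord1 -/z Cz c0 mxE.
Qed.
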